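(* In the graph process described in the context, for every $v\in[n]$, $$\bigl|\{u\in[n]: d_{H^{(q)}}(v,u)<h\}\bigr|\le 2\delta^{h-1}n.$$
   Context: Fix integers $n\ge1$, $h\ge2$, a real $\delta\in(0,1)$ with $\delta n^{1/(h-1)}>3$, and $S=\{1,\ldots,\lfloor\delta n\rfloor\}\subseteq[n]$. Let $(a_1,b_1),\ldots,(a_q,b_q)$ be a sequence of unordered pairs of distinct points of $[n]$, no pair repeated. All graphs are unweighted undirected on vertex set $[n]$; $d_G$ is the shortest-path (edge-count) distance ($\infty$ if disconnected), $\deg_G$ the degree. Graph process: $E_G^{(0)}=\{(u,v): u,v\in[n]\setminus S, u\ne v\}$, $E_H^{(0)}=\emptyset$, $G^{(i)}=([n],E_G^{(i)})$, $H^{(i)}=([n],E_H^{(i)})$. For $i=1,\ldots,q$: if $d_{G^{(i-1)}}(a_i,b_i)\le h$, choose a shortest $a_i$-$b_i$ path $P_i$ in $G^{(i-1)}$, set $E_H^{(i)}=E_H^{(i-1)}\cup\{\text{edges of }P_i\}$ and $E_G^{(i)}=E_G^{(i-1)}\setminus\{(u,v)\in E_G^{(i-1)}\setminus E_H^{(i)}: \deg_{H^{(i)}}(u)\ge\delta n^{1/(h-1)}-2\text{ or }\deg_{H^{(i)}}(v)\ge\delta n^{1/(h-1)}-2\}$; otherwise set $E_H^{(i)}=E_H^{(i-1)}$, $E_G^{(i)}=E_G^{(i-1)}$. *)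

(* Defs.v *)
From Stdlib Require Import Reals.
From mathcomp Require Import all_boot.

(* Stdlib's R_scope key %R is taken over by mathcomp; use %Re for reals. *)
Delimit Scope R_scope with Re.

Set Implicit Arguments.
Unset Strict Implicit.
Unset Printing Implicit Defensive.

(* Vertex set [n] = {1,...,n} is represented by 'I_n; ordinal i stands for i+1.
   An (undirected, simple) edge set is a set of 2-element vertex sets. *)
Definition edgeset (n : nat) := {set {set 'I_n}}.

Definition adj n (E : edgeset n) : rel 'I_n :=
  fun x y => (x != y) && ([set x; y] \in E).

(* p is a walk from a to b in E; its length (number of edges) is size p *)
Definition is_walk n (E : edgeset n) (a b : 'I_n) (p : seq 'I_n) : bool :=
  path (adj E) a p && (last a p == b).

(* d_E(a,b) <= k  (false when a, b are disconnected) *)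
Definition dist_le n (E : edgeset n) (a b : 'I_n) (k : nat) : bool :=
  [exists j : 'I_k.+1, [exists p : j.-tuple 'I_n, is_walk E a b p]].

Definition dist_lt n (E : edgeset n) (a b : 'I_n) (k : nat) : bool :=
  [exists j : 'I_k, [exists p : j.-tuple 'I_n, is_walk E a b p]].

Definition shortest_path n (E : edgeset n) (a b : 'I_n) (p : seq 'I_n) : Prop :=
  is_walk E a b p /\ forall p' : seq 'I_n, is_walk E a b p' -> size p <= size p'.

Definition path_edges n (a : 'I_n) (p : seq 'I_n) : edgeset n :=
  [set:: [seq [set xy.1; xy.2] | xy <- zip (a :: p) p]].

Definition deg n (E : edgeset n) (u : 'I_n) : nat :=
  #|[set w | (w != u) && ([set u; w] \in E)]|.

(* S = {1, ..., floor(delta n)}: vertex i (standing for i+1) is in S iff i < floor(delta n) *)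
Definition floorS (n : nat) (delta : R) : nat := Z.to_nat (Int_part (delta * INR n)).

Definition inS n (delta : R) (u : 'I_n) : bool := (nat_of_ord u < floorS n delta)%N.

Definition G0 n (delta : R) : edgeset n :=
  [set e : {set 'I_n} | (#|e| == 2)%N && [forall u in e, ~~ inS delta u]].

Definition thr (n h : nat) (delta : R) : R :=
  (delta * Rpower (INR n) (/ INR (h - 1)))%Re.

(* One step i of the process, with pair (a,b): (G,H) = (G^(i-1),H^(i-1)),
   (G',H') = (G^(i),H^(i)).  The shortest path P_i is an arbitrary choice. *)
Definition step n (h : nat) (delta : R) (ab : 'I_n * 'I_n)
  (G H G' H' : edgeset n) : Prop :=
  if dist_le G ab.1 ab.2 h then
    exists p : seq 'I_n,
      shortest_path G ab.1 ab.2 p /\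
      H' = H :|: path_edges ab.1 p /\
      (forall e : {set 'I_n}, e \in G' <->
         (e \in G /\
          ~ (e \notin H' /\
             exists u : 'I_n, u \in e /\ (thr n h delta - 2 <= INR (deg H' u))%Re)))
  else G' = G /\ H' = H.

Definition process n (h : nat) (delta : R) (ps : seq ('I_n * 'I_n))
  (Gs Hs : nat -> edgeset n) : Prop :=
  Gs 0%N = G0 n delta /\ Hs 0%N = set0 /\
  forall (i : nat) (ab : 'I_n * 'I_n), onth ps i = Some ab ->
    step h delta ab (Gs i) (Hs i) (Gs i.+1) (Hs i.+1).

(* Main.v *)
Require Import Defs.
From Stdlib Require Import Reals Lra.
From mathcomp Require Import all_boot.

Set Implicit Arguments.
Unset Strict Implicit.
Unset Printing Implicit Defensive.

Definition nb n (E : edgeset n) (u : 'I_n) : {set 'I_n} :=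
  [set w | (w != u) && ([set u; w] \in E)].

Lemma dist_ltP n (E : edgeset n) a b k :
  dist_lt E a b k <-> exists p, is_walk E a b p /\ size p < k.
Proof.
split.
  move/existsP=> [j /existsP [p Hp]]; exists p; split => //.
  by rewrite size_tuple.
move=> [p [Hp Hs]]; apply/existsP; exists (Ordinal Hs); apply/existsP.
by exists (in_tuple p).
Qed.

Lemma shorten_walk (T : eqType) (e : rel T) x p :
  path e x p -> ~~ uniq (x :: p) ->
  exists p', [/\ path e x p', last x p' = last x p & size p' < size p].
Proof.
elim: p x => [|y p IH] x Hp; first by [].
rewrite cons_uniq negb_and negbK => /orP [Hx|Hu].
  case/splitPr: Hx Hp => p1 p2 Hp.
  exists p2; split.
  - by move: Hp; rewrite cat_path => /andP [_ /= /andP [_ ->]].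
  - by rewrite last_cat.
  - by rewrite size_cat /= addnS ltnS leq_addl.
move: Hp => /= /andP [exy Hp].
have [p' [H1 H2 H3]] := IH y Hp Hu.
by exists (y :: p'); rewrite /= exy H1 H2 ltnS.
Qed.

Lemma shortest_uniq n (E : edgeset n) a b p :
  shortest_path E a b p -> uniq (a :: p).
Proof.
move=> [/andP [Hp Hl] Hmin]; apply/negPn/negP => Hn.
have [p' [H1 H2 H3]] := shorten_walk Hp Hn.
have := Hmin p'; rewrite /is_walk H1 H2 Hl => /(_ isT).
by rewrite leqNgt H3.
Qed.

Lemma pe_mem n (a : 'I_n) p e : e \in path_edges a p ->
  exists2 k, k < size p & e = [set nth a (a :: p) k; nth a p k].
Proof.
rewrite /path_edges inE => /mapP [xy Hxy ->].
move/(nthP (a, a)): Hxy => [k Hk Hn].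
have Hs : size (zip (a :: p) p) = size p by rewrite size_zip /=; apply/minn_idPr.
rewrite Hs in Hk; exists k => //.
by rewrite -Hn nth_zip_cond Hs Hk.
Qed.

Lemma set2_eq (T : finType) (u w x y : T) : u != w -> [set u; w] = [set x; y] ->
  (u = x /\ w = y) \/ (u = y /\ w = x).
Proof.
move=> Huw He.
have Hu : u \in [set x; y] by rewrite -He set21.
have Hw : w \in [set x; y] by rewrite -He set22.
case/set2P: Hu => Hu; subst u.
  left; split => //; case/set2P: Hw => // Hw; by rewrite Hw eqxx in Huw.
right; split => //; case/set2P: Hw => // Hw; by rewrite Hw eqxx in Huw.
Qed.

Lemma nb_pe_card n (a : 'I_n) p u : uniq (a :: p) -> #|nb (path_edges a p) u| <= 2.
Proof.
move=> Hu.
set s := a :: p; set i := index u s.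
have : nb (path_edges a p) u \subset [set nth a s i.+1; nth a s i.-1].
  apply/subsetP => w; rewrite inE => /andP [Hwu /pe_mem [k Hk He]].
  have Hks : k < size s by rewrite /= ltnS ltnW.
  have Hk1 : k.+1 < size s by rewrite /= ltnS.
  have Hn : nth a p k = nth a s k.+1 by [].
  rewrite Hn in He.
  case: (set2_eq _ He); first by rewrite eq_sym.
  - move=> [Hu1 Hw1]; apply/set2P; left.
    by rewrite /i Hu1 index_uniq.
  - move=> [Hu1 Hw1]; apply/set2P; right.
    by rewrite /i Hu1 index_uniq.
move/subset_leq_card; rewrite cards2 => H; apply: (leq_trans H).
by case: (_ != _).
Qed.

Lemma pe_inG n (G : edgeset n) a p e : path (adj G) a p ->
  e \in path_edges a p -> e \in G.
Proof.
move=> /(pathP a) Hp /pe_mem [k Hk ->].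
by have /andP [_ ->] := Hp k Hk.
Qed.

Lemma nbU n (H P : edgeset n) u : nb (H :|: P) u = nb H u :|: nb P u.
Proof.
apply/setP => w; rewrite !inE; by case: (w != u).
Qed.

Lemma deg_nb n (E : edgeset n) u : deg E u = #|nb E u|.
Proof. by []. Qed.

Lemma deg_stepU n (H P : edgeset n) u : deg (H :|: P) u <= deg H u + #|nb P u|.
Proof. by rewrite !deg_nb nbU cardsU leq_subr. Qed.

Lemma deg_same n (H P : edgeset n) u : nb P u \subset nb H u ->
  deg (H :|: P) u = deg H u.
Proof. by rewrite !deg_nb nbU => /setUidPl ->. Qed.

Lemma card_bigcup_le (T I : finType) (A : {pred I}) (F : I -> {set T}) :
  #|\bigcup_(x in A) F x| <= \sum_(x in A) #|F x|.
Proof.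
apply: (big_ind2 (fun (X : {set T}) m => #|X| <= m)).
- by rewrite cards0.
- move=> X1 m1 X2 m2 H1 H2; rewrite cardsU.
  apply: leq_trans (leq_subr _ _) _; exact: leq_add.
- by [].
Qed.

Definition ball n (E : edgeset n) v m : {set 'I_n} :=
  [set u | [exists j : 'I_m, [exists p : j.-tuple 'I_n, is_walk E v u p]]].

Lemma in_ball n (E : edgeset n) v m u :
  u \in ball E v m <-> exists p, is_walk E v u p /\ size p < m.
Proof. rewrite inE; exact: dist_ltP. Qed.

Lemma ball1 n (E : edgeset n) v : #|ball E v 1| <= 1.
Proof.
have : ball E v 1 \subset [set v].
  apply/subsetP => u /in_ball [p [/andP [_ Hl] Hs]].
  by case: p Hs Hl => //= _ /eqP ->; rewrite set11.
by move/subset_leq_card; rewrite cards1.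
Qed.

Lemma ball_step n (E : edgeset n) v m D : (forall x, deg E x <= D) ->
  #|ball E v m.+2| <= 1 + D * #|ball E v m.+1|.
Proof.
move=> HD.
have : ball E v m.+2 \subset v |: \bigcup_(x in ball E v m.+1) nb E x.
  apply/subsetP => u /in_ball [p [/andP [Hp Hl] Hs]].
  case/lastP: p Hp Hl Hs => [|q y].
    by move=> _ /= /eqP ->; rewrite setU11.
  rewrite rcons_path last_rcons size_rcons ltnS => /andP [Hq Hadj] /eqP Hy Hs.
  subst y; apply/setU1P; right; apply/bigcupP; exists (last v q).
    by apply/in_ball; exists q; rewrite /is_walk Hq eqxx.
  by move: Hadj => /andP [H1 H2]; rewrite inE eq_sym H1 H2.
move/subset_leq_card => H; apply: (leq_trans H).
rewrite cardsU1; apply: leq_add; first by case: (_ \notin _).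
apply: (leq_trans (card_bigcup_le _ _)).
rewrite mulnC -sum_nat_const; apply: leq_sum => x _; exact: HD.
Qed.

Lemma ball_bound n (E : edgeset n) v D (T : R) : (forall x, deg E x <= D) ->
  (INR D <= T)%Re -> (2 <= T)%Re ->
  forall m, (INR #|ball E v m.+1| <= 2 * T ^ m - 1)%Re.
Proof.
move=> HD HDT HT; elim => [|m IH].
  have /leP /le_INR H := ball1 E v; simpl in H |- *; lra.
have /leP /le_INR H := ball_step v m HD.
rewrite -plusE -multE plus_INR mult_INR in H.
have H0 := pos_INR D; have H1 := pos_INR #|ball E v m.+1|.
have H2 : (INR D * INR #|ball E v m.+1| <= T * (2 * T ^ m - 1))%Re.
  by apply: Rmult_le_compat.
change (T ^ m.+1)%Re with (T * T ^ m)%Re.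
simpl INR in H.
have E2 : (T * (2 * T ^ m - 1) = 2 * (T * T ^ m) - T)%Re by ring.
rewrite E2 in H2; set X := (T * T ^ m)%Re in H2 *. apply: (Rle_trans _ _ _ H). move: H2; set Y := (INR D * _)%Re; move=> H2; lra.
Qed.

Theorem mainTheorem7 (n h : nat) (delta : R)
  (Hn : (1 <= n)%N) (Hh : (2 <= h)%N)
  (Hd0 : (0 < delta)%Re) (Hd1 : (delta < 1)%Re)
  (Hthr : (3 < thr n h delta)%Re)
  (ps : seq ('I_n * 'I_n))
  (Hdist : all (fun ab => ab.1 != ab.2) ps)
  (Huniq : uniq [seq [set ab.1; ab.2] | ab <- ps])
  (Gs Hs : nat -> edgeset n)
  (Hproc : process h delta ps Gs Hs) :
  forall v : 'I_n,
    (INR #|[set u : 'I_n | dist_lt (Hs (size ps)) v u h]|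
       <= 2 * delta ^ (h - 1) * INR n)%Re.
Proof.
move=> v.
have Tpow : (thr n h delta ^ (h - 1) = delta ^ (h - 1) * INR n)%Re.
  rewrite /thr Rpow_mult_distr; congr (_ * _)%Re.
  rewrite -Rpower_pow; last by rewrite /Rpower; apply: exp_pos.
  rewrite Rpower_mult Rinv_l; last by apply: not_0_INR; apply/eqP; rewrite subn_eq0 -ltnNge.
  apply: Rpower_1; apply: lt_0_INR; apply/ltP; exact: Hn.
set T := thr n h delta in Hthr Tpow *.
case: Hproc => [HG0 [HH0 Hstep]].
have Hinv : forall i, i <= size ps ->
   (forall u, (INR (deg (Hs i) u) < T)%Re) /\
   (forall e u, e \in Gs i -> u \in e -> (T - 2 <= INR (deg (Hs i) u))%Re -> e \in Hs i).
  elim => [_|i IH Hi].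
    rewrite HH0.
    have Hd : forall u : 'I_n, deg (set0 : edgeset n) u = 0.
      move=> u; rewrite deg_nb; apply/eqP; rewrite cards_eq0; apply/eqP/setP => w.
      by rewrite !inE andbF.
    split => [u|e u _ _]; rewrite Hd /=; lra.
  have [IH1 IH2] := IH (ltnW Hi).
  have Ho : onth ps i = Some (nth (v, v) ps i) by rewrite onthE (nth_map (v, v)).
  have := Hstep i _ Ho; rewrite /step; case: ifP => Hd.
    move=> [p [Hsp [HH' HG']]].
    have Hu := shortest_uniq Hsp.
    have [/andP [Hpath _] _] := Hsp.
    split.
      move=> u; rewrite HH'.
      case: (Rle_lt_dec (T - 2) (INR (deg (Hs i) u))) => Hc.
        rewrite deg_same; first exact: IH1.
        apply/subsetP => w; rewrite in_set => /andP [Hwu Hin]; rewrite in_set Hwu /=.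
        apply: (IH2 _ u) => //; [exact: pe_inG Hpath Hin | by rewrite set21].
      have H1 := deg_stepU (Hs i) (path_edges (nth (v, v) ps i).1 p) u.
      have H2 := nb_pe_card u Hu.
      have /leP /le_INR := leq_trans H1 (leq_add (leqnn _) H2).
      rewrite -plusE plus_INR; simpl INR; lra.
    move=> e u He Hue Hdeg.
    have [_ Hn'] := (HG' e).1 He.
    apply/negPn/negP => Hne; apply: Hn'; split => //; exists u; split => //.
  by move=> [-> ->]; split.
have [Hdeg _] := Hinv (size ps) (leqnn _).
set H := Hs (size ps) in Hdeg *.
have Hc : 0 < #|'I_n| by rewrite card_ord.
have [i0 Hi0] := eq_bigmax (fun u => deg H u) Hc.
set D := \max_u deg H u in Hi0.
have HD : forall x, deg H x <= D by move=> x; rewrite /D; exact: leq_bigmax.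
have HDT : (INR D <= T)%Re by rewrite Hi0; left; apply: Hdeg.
have Hb := ball_bound v HD HDT ltac:(lra) (h - 1).
have Eh : (h - 1).+1 = h by rewrite subn1 prednK // ltnW.
rewrite Eh in Hb.
change (INR #|ball H v h| <= 2 * delta ^ (h - 1) * INR n)%Re.
rewrite Tpow in Hb; lra.
Qed.
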